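(* Every branch of a minimal tree is itself a minimal tree (i.e., if $T$ is minimal and $H$ is a branch of $T$ with $|H|=k$, then $I(H)=m_k$).
   Context: A rooted tree $T$ is a finite tree with a distinguished vertex, its root; its order $|T|$ is its number of vertices. For vertices $u,v$, the infimum of $u$ and $v$ is the vertex common to the path from $u$ to the root and the path from $v$ to the root that is furthest from the root. A set $X\subseteq V(T)$ is infima closed if the infimum of any two elements of $X$ lies in $X$. $I(T)$ denotes the number of nonempty infima closed subsets of $V(T)$. For $n\ge1$, $m_n=\min\{I(T): T \text{ a rooted tree with } n \text{ vertices}\}$; a rooted tree $T$ with $I(T)=m_{|T|}$ is called minimal. A branch of $T$ is the subtree consisting of a vertex $v$ together with all its descendants, rooted at $v$. *)

(* Defs.v *)
From mathcomp Require Import all_boot.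
Set Implicit Arguments. Unset Strict Implicit. Unset Printing Implicit Defensive.

(* A rooted tree on a finite vertex type T is given by its root r and a
   parent map p : T -> T, with p r = r and every vertex reaching r by
   iterating p (edges are {v, p v} for v <> r). *)
Definition is_rtree (T : finType) (r : T) (p : T -> T) : bool :=
  (p r == r) && [forall v : T, iter #|T| p v == r].

Definition anc (T : finType) (p : T -> T) (u v : T) : bool :=
  [exists k : 'I_#|T|.+1, iter k p v == u].

Definition is_inf (T : finType) (p : T -> T) (u v w : T) : bool :=
  [&& anc p w u, anc p w v & [forall z : T, anc p z u && anc p z v ==> anc p z w]].

Definition inf_closed (T : finType) (p : T -> T) (X : {set T}) : bool :=
  [forall u in X, forall v in X, forall w : T, is_inf p u v w ==> (w \in X)].

Definition I (T : finType) (p : T -> T) : nat :=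
  #|[set X : {set T} | (X != set0) && inf_closed p X]|.

(* T is minimal: I(T) = m_{|T|} = min of I over rooted trees with |T| vertices.
   Since T itself is such a tree, this means I(T) <= I(T') for all of them. *)
Definition minimal (T : finType) (r : T) (p : T -> T) : Prop :=
  is_rtree r p /\
  forall (T' : finType) (r' : T') (p' : T' -> T'),
    is_rtree r' p' -> #|T'| = #|T| -> I p <= I p'.

Definition branch_type (T : finType) (p : T -> T) (v : T) : finType :=
  {u : T | anc p v u}.

Lemma anc_refl (T : finType) (p : T -> T) (v : T) : anc p v v.
Proof. by apply/existsP; exists ord0. Qed.

Definition branch_root (T : finType) (p : T -> T) (v : T) : branch_type p v :=
  exist _ v (anc_refl p v).

Definition branch_parent (T : finType) (p : T -> T) (v : T)
  (u : branch_type p v) : branch_type p v :=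
  insubd (branch_root p v) (if val u == v then v else p (val u)).

(* Main.v *)
Require Import Defs.
From mathcomp Require Import all_boot.
Set Implicit Arguments. Unset Strict Implicit. Unset Printing Implicit Defensive.

Section Gen.
Variable T : finType.
Implicit Types (p : T -> T).

Lemma iterP p x y : reflect (exists n, iter n p x = y) (fconnect p x y).
Proof.
apply: (iffP idP) => [H|[n <-]]; last exact: fconnect_iter.
by exists (findex p x y); rewrite iter_findex.
Qed.

Lemma ancE p u w : anc p u w = fconnect p w u.
Proof.
apply/existsP/idP => [[k /eqP <-]|H]; first exact: fconnect_iter.
have Hk : findex p w u < #|T|.+1.
  apply: leq_trans (findex_max H) _; apply: ltnW; rewrite ltnS.
  exact: max_card.
by exists (Ordinal Hk); rewrite /= iter_findex.
Qed.

Lemma iter_fix p r n : p r = r -> iter n p r = r.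
Proof. by move=> Hr; elim: n => //= n ->. Qed.

Lemma rtreeP r p : is_rtree r p <-> p r = r /\ forall x, fconnect p x r.
Proof.
split.
  case/andP=> /eqP Hr /forallP H; split=> // x.
  by apply/iterP; exists #|T|; apply/eqP.
case=> Hr H; apply/andP; split; first by apply/eqP.
apply/forallP => x; apply/eqP.
have Hx := H x.
have Hk : findex p x r <= #|T|.
  apply: ltnW; apply: leq_trans (findex_max Hx) _; exact: max_card.
by rewrite -(subnK Hk) iterD iter_findex // iter_fix.
Qed.

Lemma inf_closedP p (X : {set T}) :
  reflect (forall u v w, u \in X -> v \in X -> is_inf p u v w -> w \in X)
          (inf_closed p X).
Proof.
apply: (iffP forallP) => [H u v w Hu Hv Hi|H u].
  by move: (H u); rewrite Hu => /forallP/(_ v); rewrite Hv => /forallP/(_ w)/implyP; apply.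
apply/implyP => Hu; apply/forallP => v; apply/implyP => Hv; apply/forallP => w.
by apply/implyP; apply: H.
Qed.

Definition J p := #|[set X : {set T} | inf_closed p X]|.

Lemma JE p : J p = (I p).+1.
Proof.
rewrite /J /I.
have -> : [set X : {set T} | inf_closed p X] =
   set0 |: [set X : {set T} | (X != set0) && inf_closed p X].
  apply/setP => X; rewrite !inE; case: eqP => [->|] //=.
  by apply/inf_closedP => u v w; rewrite inE.
by rewrite cardsU1 !inE eqxx.
Qed.

Lemma J_sum p : J p = \sum_(X : {set T}) inf_closed p X.
Proof.
rewrite /J -sum1_card big_mkcond /=; apply: eq_bigr => X _.
by rewrite inE; case: inf_closed.
Qed.

End Gen.

Section Iso.
Variables (T S : finType) (p : T -> T) (p' : S -> S) (f : T -> S) (g : S -> T).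
Hypotheses (fK : cancel f g) (gK : cancel g f) (fp : forall u, f (p u) = p' (f u)).

Lemma iter_iso n u : f (iter n p u) = iter n p' (f u).
Proof. by elim: n => //= n <-; rewrite fp. Qed.

Lemma anc_iso u w : anc p' (f u) (f w) = anc p u w.
Proof.
rewrite !ancE; apply/iterP/iterP => [[n Hn]|[n <-]]; exists n; last by rewrite iter_iso.
by apply: (can_inj fK); rewrite iter_iso.
Qed.

Lemma forall_iso (P : pred S) : [forall y, P y] = [forall x, P (f x)].
Proof.
apply/forallP/forallP => H y //; by rewrite -(gK y).
Qed.

Lemma is_inf_iso u v w : is_inf p' (f u) (f v) (f w) = is_inf p u v w.
Proof.
rewrite /is_inf !anc_iso forall_iso; congr [&& _, _ & _].
by apply: eq_forallb => z; rewrite !anc_iso.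
Qed.

Lemma inf_closed_iso (Y : {set S}) :
  inf_closed p' Y = inf_closed p [set x | f x \in Y].
Proof.
apply/inf_closedP/inf_closedP => H u v w.
  rewrite !inE => Hu Hv Hi; apply: H Hu Hv _; by rewrite is_inf_iso.
rewrite -(gK u) -(gK v) -(gK w) is_inf_iso => Hu Hv Hi.
by have := H _ _ _ _ _ Hi; rewrite !inE; apply.
Qed.

Lemma J_iso : J p' = J p.
Proof.
rewrite !J_sum (reindex (fun X : {set T} => [set y | g y \in X])) /=.
  apply: eq_bigr => X _; rewrite inf_closed_iso; congr (nat_of_bool (inf_closed _ _)).
  by apply/setP => x; rewrite !inE fK.
exists (fun Y : {set S} => [set x | f x \in Y]) => X _; apply/setP => x;
  by rewrite !inE ?fK ?gK.
Qed.

End Iso.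

Section Comb.
Variables (O H : finType) (q : O -> O) (a : O) (ph : H -> H) (h : H).
Hypotheses (Hh : ph h = h) (Ht : forall x, fconnect ph x h).

Definition cp (c : O + H) : O + H :=
  match c with inl o => inl (q o) | inr x => if x == h then inl a else inr (ph x) end.

Lemma iter_inl n o : iter n cp (inl o) = inl (iter n q o).
Proof. by elim: n => //= n ->. Qed.

Lemma iter_inr n x :
  iter n cp (inr x) = inr (iter n ph x) \/
  exists2 o, iter n cp (inr x) = inl o & fconnect q a o.
Proof.
elim: n => [|n IH]; first by left.
rewrite !iterS; case: IH => [IH|[o IH Ho]].
- rewrite IH /=; case: eqP => [E|_]; last by left.
  by right; exists a.
- right; exists (q o); first by rewrite IH.
  exact: connect_trans Ho (fconnect1 _ _).
Qed.

Lemma fc_inr x y : fconnect ph x y -> fconnect cp (inr x) (inr y).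
Proof.
case/iterP => n <-; elim: n => //= n IH.
case: (eqVneq (iter n ph x) h) => E.
  by rewrite E Hh -E.
apply: connect_trans IH _; apply/connect1 => /=; by rewrite /= (negPf E).
Qed.

Lemma ancA1 o o' : anc cp (inl o) (inl o') = anc q o o'.
Proof.
rewrite !ancE; apply/iterP/iterP => [[n Hn]|[n <-]]; exists n; [move: Hn; rewrite iter_inl; by case | by rewrite iter_inl].
Qed.

Lemma ancA2 x o : anc cp (inr x) (inl o) = false.
Proof. by apply/negbTE; rewrite ancE; apply/iterP => [[n]]; rewrite iter_inl. Qed.

Lemma ancA3 x x' : anc cp (inr x) (inr x') = anc ph x x'.
Proof.
rewrite !ancE; apply/idP/idP; last exact: fc_inr.
case/iterP => n; case: (iter_inr n x') => [-> [<-]|[o -> //]].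
exact: fconnect_iter.
Qed.

Lemma ancA4 o x : anc cp (inl o) (inr x) = anc q o a.
Proof.
rewrite !ancE; apply/idP/idP.
  case/iterP => n; case: (iter_inr n x) => [-> //|[o' -> Ho [<-]]] //.
move=> Ho; apply: connect_trans (fc_inr (Ht x)) _.
apply: connect_trans (connect1 _) _; first by rewrite /= /= eqxx.
by rewrite -ancE ancA1 ancE.
Qed.

Lemma forall_sum (P : pred (O + H)) :
  [forall c, P c] = [forall o, P (inl o)] && [forall x, P (inr x)].
Proof.
apply/forallP/andP => [H1|[/forallP H1 /forallP H2] [o|x] //].
by split; apply/forallP => ?; apply: H1.
Qed.

Lemma is_inf_ll y y' w : is_inf cp (inl y) (inl y') (inl w) = is_inf q y y' w.
Proof.
rewrite /is_inf forall_sum !ancA1; congr [&& _, _ & _].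
rewrite [X in _ && X](_ : _ = true) ?andbT; last by apply/forallP => x; rewrite ancA2.
by apply: eq_forallb => z; rewrite !ancA1.
Qed.

Lemma is_inf_llr y y' w : is_inf cp (inl y) (inl y') (inr w) = false.
Proof. by rewrite /is_inf ancA2. Qed.

Lemma is_inf_rr z z' w : is_inf cp (inr z) (inr z') (inr w) = is_inf ph z z' w.
Proof.
rewrite /is_inf forall_sum !ancA3; congr [&& _, _ & _].
rewrite [X in X && _](_ : _ = true); last first.
  by apply/forallP => o; rewrite !ancA4 andbb implybb.
by apply: eq_forallb => x; rewrite !ancA3.
Qed.

Lemma is_inf_rrl z z' w : is_inf cp (inr z) (inr z') (inl w) = false.
Proof.
rewrite /is_inf forall_sum; apply/negbTE; apply/negP => /and3P [_ _ /andP [_ /forallP /(_ h)]].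
by rewrite !ancA3 ancA2 !ancE !Ht.
Qed.

Lemma is_inf_lrl y z w : is_inf cp (inl y) (inr z) (inl w) = is_inf q y a w.
Proof.
rewrite /is_inf forall_sum ancA1 ancA4; congr [&& _, _ & _].
rewrite [X in _ && X](_ : _ = true) ?andbT; last by apply/forallP => x; rewrite ancA2.
by apply: eq_forallb => x; rewrite ancA1 ancA4 ancA1.
Qed.

Lemma is_infC (U : finType) (pp : U -> U) u v w : is_inf pp u v w = is_inf pp v u w.
Proof.
rewrite /is_inf andbCA; congr [&& _, _ & _]; apply: eq_forallb => z; by rewrite andbC.
Qed.

Lemma is_inf_rll z y w : is_inf cp (inr z) (inl y) (inl w) = is_inf q y a w.
Proof. by rewrite is_infC is_inf_lrl. Qed.

Lemma is_inf_lrr y z w : is_inf cp (inl y) (inr z) (inr w) = false.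
Proof. by rewrite /is_inf ancA2. Qed.

Lemma is_inf_rlr z y w : is_inf cp (inr z) (inl y) (inr w) = false.
Proof. by rewrite /is_inf ancA2 andbF. Qed.

Definition PY (Y : {set O}) := [forall y in Y, forall w, is_inf q y a w ==> (w \in Y)].

Definition mk (Y : {set O}) (Z : {set H}) : {set O + H} :=
  [set c | match c with inl o => o \in Y | inr x => x \in Z end].

Lemma closed_mk Y Z :
  inf_closed cp (mk Y Z) = [&& inf_closed q Y, inf_closed ph Z & (Z == set0) || PY Y].
Proof.
apply/inf_closedP/and3P.
  move=> Hc; split.
  - apply/inf_closedP => u v w Hu Hv Hi.
    have := Hc (inl u) (inl v) (inl w); rewrite !inE is_inf_ll; by apply.
  - apply/inf_closedP => u v w Hu Hv Hi.
    have := Hc (inr u) (inr v) (inr w); rewrite !inE is_inf_rr; by apply.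
  - case: (set_0Vmem Z) => [->|[z Hz]]; first by rewrite eqxx.
    apply/orP; right; apply/forallP => y; apply/implyP => Hy; apply/forallP => w.
    apply/implyP => Hi.
    have := Hc (inl y) (inr z) (inl w); rewrite !inE is_inf_lrl; by apply.
move=> [/inf_closedP HY /inf_closedP HZ HP] [u|u] [v|v] [w|w]; rewrite !inE;
  rewrite ?is_inf_ll ?is_inf_llr ?is_inf_rr ?is_inf_rrl ?is_inf_lrl ?is_inf_rll
    ?is_inf_lrr ?is_inf_rlr //.
- exact: HY.
- move=> Hu Hv Hi; case/orP: HP => [/eqP Z0|/forallP /(_ u)].
    by move: Hv; rewrite Z0 inE.
  by rewrite Hu => /forallP /(_ w) /implyP; apply.
- move=> Hu Hv Hi; case/orP: HP => [/eqP Z0|/forallP /(_ v)].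
    by move: Hu; rewrite Z0 inE.
  by rewrite Hv => /forallP /(_ w) /implyP; apply.
- exact: HZ.
Qed.

Definition c1 := \sum_(Y : {set O}) (inf_closed q Y && ~~ PY Y).
Definition c2 := \sum_(Y : {set O}) (inf_closed q Y && PY Y).

Lemma c2_pos : 0 < c2.
Proof.
rewrite /c2 (bigD1 set0) //= addn_gt0; apply/orP; left.
have -> : inf_closed q set0 by apply/inf_closedP => u v w; rewrite inE.
by have -> : PY set0 by apply/forallP => y; rewrite inE.
Qed.

Lemma J_comb : J cp = c1 + c2 * J ph.
Proof.
rewrite J_sum (reindex (fun YZ : {set O} * {set H} => mk YZ.1 YZ.2)) /=; last first.
  exists (fun X : {set O + H} => ([set o | inl o \in X], [set x | inr x \in X])) => [[Y Z]|X] _.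
    by congr (_, _); apply/setP => x; rewrite !inE.
  by apply/setP => [[o|x]]; rewrite !inE.
rewrite -(pair_big xpredT xpredT (fun Y Z => nat_of_bool (inf_closed cp (mk Y Z)))) /=.
rewrite /c1 /c2 J_sum big_distrl -big_split /=; apply: eq_bigr => Y _.
under eq_bigr do rewrite closed_mk.
case: (inf_closed q Y) => /=; last by rewrite big1 // mul0n.
case: (PY Y) => /=.
  by rewrite mul1n; apply: eq_bigr => Z _; rewrite orbT andbT.
rewrite mul0n addn0 (bigD1 set0) //= eqxx andbT.
have -> : inf_closed ph set0 by apply/inf_closedP => u v w; rewrite inE.
rewrite big1 // => Z HZ; by rewrite orbF (negbTE HZ) andbF.
Qed.

End Comb.

Section Main.
Variables (T : finType) (r : T) (p : T -> T) (v : T).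
Hypotheses (Hr : p r = r) (Ht : forall x, fconnect p x r).

Let broot := branch_root p v.
Let bp := @branch_parent T p v.

Lemma anc_p u : anc p v u -> u != v -> anc p v (p u).
Proof.
rewrite !ancE => /iterP [[|n] /= Hn] Huv; first by rewrite Hn eqxx in Huv.
by apply/iterP; exists n; rewrite -iterSr.
Qed.

Lemma anc_pC u : ~~ anc p v u -> ~~ anc p v (p u).
Proof.
apply: contra; rewrite !ancE => H; apply: connect_trans H.
exact: fconnect1.
Qed.

Lemma bp_val u : val (bp u) = if val u == v then v else p (val u).
Proof.
rewrite /bp /branch_parent insubdK //; case: eqP => [_|/eqP Hn].
  exact: anc_refl.
exact: anc_p (valP u) Hn.
Qed.

Lemma Br_tree : is_rtree broot bp.
Proof.
apply/rtreeP; split.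
  by apply: val_inj; rewrite bp_val /= eqxx.
move=> u; have := valP u; rewrite ancE => /iterP [n].
elim: n u => [|n IH] u /= Hn.
  by have -> : u = broot by apply: val_inj.
case: (eqVneq (val u) v) => E.
  by have -> : u = broot by apply: val_inj.
apply: connect_trans (fconnect1 _ _) (IH _ _).
by rewrite bp_val (negbTE E) -iterSr.
Qed.

Lemma iter_per k m : iter k.+1 p v = v -> iter (m * k.+1) p v = v.
Proof. by move=> H; elim: m => [|m IH] //; rewrite mulSn iterD IH H. Qed.

Lemma not_anc_pv : v != r -> ~~ anc p v (p v).
Proof.
move=> Hvr; apply/negP; rewrite ancE => /iterP [n Hn].
have Hn' : iter n.+1 p v = v by rewrite iterSr.
have Hk := iter_findex (Ht v).
set k := findex p v r in Hk.
have := iter_per k Hn'; rewrite mulnS addnC iterD Hk iter_fix // => E.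
by rewrite E eqxx in Hvr.
Qed.

End Main.

Lemma leI_J (T1 T2 : finType) (p1 : T1 -> T1) (p2 : T2 -> T2) :
  (I p1 <= I p2) = (J p1 <= J p2).
Proof. by rewrite !JE ltnS. Qed.

Unset Implicit Arguments.
Theorem lemma2p1 (T : finType) (r : T) (p : T -> T) (v : T) :
  minimal r p -> minimal (branch_root p v) (@branch_parent T p v).
Proof.
case=> Htree Hmin; have [Hr Ht] := (rtreeP _ _).1 Htree.
split; first exact: Br_tree.
move=> T' r' p' Htree' Hcard.
have bpv := bp_val (p:=p) (v:=v).
case: (eqVneq v r) => [Evr|Hvr].
  have Hall : forall t, anc p v t by move=> t; rewrite ancE Evr.
  have fK : cancel (val : branch_type p v -> T) (insubd (branch_root p v)).
    by move=> u; rewrite valKd.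
  have gK : cancel (insubd (branch_root p v)) (val : branch_type p v -> T).
    by move=> t; rewrite insubdK //; apply: Hall.
  have fp : forall u : branch_type p v, val (branch_parent u) = p (val u).
    by move=> u; rewrite bpv; case: eqP => // ->; rewrite Evr Hr.
  have HJ := J_iso fK gK fp.
  have HcT : #|branch_type p v| = #|T| := bij_eq_card (Bijective fK gK).
  have HIe : I (@branch_parent T p v) = I p by apply/eqP; rewrite -eqSS -!JE HJ.
  rewrite HIe; apply: (Hmin _ _ _ Htree'); by rewrite Hcard HcT.
pose O := {u : T | ~~ anc p v u}.
have HrO : ~~ anc p v r.
  rewrite ancE; apply/negP => /iterP [n]; rewrite iter_fix // => E.
  by rewrite E eqxx in Hvr.
pose rO : O := Sub r HrO.
pose q (o : O) : O := insubd o (p (val o)).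
have qv : forall o, val (q o) = p (val o).
  by move=> o; rewrite insubdK //; apply: anc_pC; exact: (valP o).
pose a : O := insubd rO (p v).
have av : val a = p v by rewrite insubdK //; apply: not_anc_pv Hr Ht Hvr.
pose broot := branch_root p v.
pose bp := @branch_parent T p v.
have Hbt := (rtreeP _ _).1 (Br_tree p v).
pose phi (u : T) : O + branch_type p v :=
  if anc p v u then inr (insubd broot u) else inl (insubd rO u).
pose psi (c : O + branch_type p v) : T :=
  match c with inl o => val o | inr x => val x end.
have phiK : cancel phi psi.
  move=> u; rewrite /phi /psi; case: ifP => H; apply: insubdK => //=; exact: negbT H.
have psiK : cancel psi phi.
  move=> [o|x]; rewrite /phi /psi.
    by rewrite (negbTE (valP o)) valKd.
  by rewrite (valP x) valKd.
have insB : forall u, anc p v u -> val (insubd broot u) = u.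
  by move=> u Hu; apply: insubdK.
have insO : forall u, ~~ anc p v u -> val (insubd rO u) = u.
  by move=> u Hu; apply: insubdK.
have phip : forall u, phi (p u) = cp q a bp broot (phi u).
  move=> u; rewrite /phi; case Hu: (anc p v u).
    case: (eqVneq u v) => [Euv|Nuv].
      have -> : insubd broot u = broot by apply: val_inj; rewrite insB Euv ?anc_refl.
      by rewrite /= eqxx Euv (negbTE (not_anc_pv Hr Ht Hvr)).
    rewrite anc_p // /=.
    have -> : (insubd broot u == broot) = false.
      apply/negbTE; apply: contra Nuv => /eqP/(congr1 val); rewrite insB //= => -> //.
    by apply: f_equal; apply: val_inj; rewrite insB ?anc_p // bpv insB // (negbTE Nuv).
  have Hu' := negbT Hu.
  rewrite (negbTE (anc_pC Hu')) /=; apply: f_equal; apply: val_inj.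
  by rewrite qv !insO // anc_pC.
have HJT : J (cp q a bp broot) = J p := J_iso phiK psiK phip.
have HJT' := @J_comb _ _ q a _ _ Hbt.1 Hbt.2.
have HcT : #|{: (O + branch_type p v)%type}| = #|T| := esym (bij_eq_card (Bijective phiK psiK)).
have [Hr' Ht'] := (rtreeP _ _).1 Htree'.
have iterq : forall n o, val (iter n q o) = iter n p (val o).
  by move=> n o; elim: n => [|n IH] //; rewrite !iterS qv IH.
have toO : forall o, fconnect q o rO.
  move=> o; have /iterP [n Hn] := Ht (val o).
  by apply/iterP; exists n; apply: val_inj; rewrite iterq Hn.
have HS : is_rtree (inl rO : O + T') (cp q a p' r').
  apply/rtreeP; split.
    by rewrite /=; apply: f_equal; apply: val_inj; rewrite qv /= Hr.
  move=> [o|x]; rewrite -ancE.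
    by rewrite ancA1 ancE.
  by rewrite ancA4 ?ancE //.
have HcS : #|{: (O + T')%type}| = #|T|.
  by rewrite -HcT !card_sum Hcard.
have := Hmin _ _ _ HS HcS; rewrite leI_J -HJT HJT' J_comb // leq_add2l.
by rewrite leq_pmul2l ?c2_pos // leI_J.
Qed.
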